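(* Let $P,Q\in\Gamma_n$ and $0<r\le R$ with $r\le p_i/q_i\le R$ for all $i$. Let $s,t\in\mathbb{R}$ with $0\le s\le4$ and $t\ge-1$. Then $$\frac{1}{R^{s+1}}\Big(\frac{R+1}{2}\Big)^{s-t-1}\big[(4-s)R+s\big]\Omega_t(Q\|P)\le\zeta_s(Q\|P)\le\frac{1}{r^{s+1}}\Big(\frac{r+1}{2}\Big)^{s-t-1}\big[(4-s)R+s\big]\Omega_t(Q\|P).$$
   Context: $\Gamma_n=\{P=(p_1,\dots,p_n): p_i>0,\ \sum_i p_i=1\}$, $n\ge2$. For $P,Q\in\Gamma_n$ and $s\in\mathbb{R}$: $\Omega_s(Q\|P)=[s(s-1)]^{-1}\big[\sum_i q_i\big(\frac{p_i+q_i}{2q_i}\big)^s-1\big]$ for $s\ne0,1$; $\Omega_0(Q\|P)=\sum_i q_i\ln\frac{2q_i}{p_i+q_i}$; $\Omega_1(Q\|P)=\sum_i\frac{p_i+q_i}{2}\ln\frac{p_i+q_i}{2q_i}$. $\zeta_s(Q\|P)=(s-1)^{-1}\sum_i(q_i-p_i)\big(\frac{p_i+q_i}{2p_i}\big)^{s-1}$ for $s\ne1$; $\zeta_1(Q\|P)=\sum_i(q_i-p_i)\ln\frac{p_i+q_i}{2p_i}$. *)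

(* Defs.v *)
From Stdlib Require Import Reals.
Open Scope R_scope.

Fixpoint rsum (n : nat) (f : nat -> R) : R :=
  match n with
  | O => 0
  | S m => rsum m f + f m
  end.

Definition Gamma (n : nat) (p : nat -> R) : Prop :=
  (forall i, (i < n)%nat -> 0 < p i) /\ rsum n p = 1.

Definition Omega (n : nat) (s : R) (q p : nat -> R) : R :=
  if Req_EM_T s 0 then
    rsum n (fun i => q i * ln (2 * q i / (p i + q i)))
  else if Req_EM_T s 1 then
    rsum n (fun i => (p i + q i) / 2 * ln ((p i + q i) / (2 * q i)))
  else
    / (s * (s - 1)) *
    (rsum n (fun i => q i * Rpower ((p i + q i) / (2 * q i)) s) - 1).

Definition zeta (n : nat) (s : R) (q p : nat -> R) : R :=
  if Req_EM_T s 1 then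
    rsum n (fun i => (q i - p i) * ln ((p i + q i) / (2 * p i)))
  else
    / (s - 1) *
    rsum n (fun i => (q i - p i) * Rpower ((p i + q i) / (2 * p i)) (s - 1)).

(* Main.v *)
Require Import Defs.
From Stdlib Require Import Reals Lra Lia Classical.
From Coquelicot Require Import Coquelicot.
Open Scope R_scope.
Definition phi0 (x : R) := - ln ((x+1)/2).
Definition phi0d (x : R) := - / (x+1).
Definition phi1 (x : R) := (x+1)/2 * ln ((x+1)/2).
Definition phi1d (x : R) := (ln ((x+1)/2) + 1)/2.
Definition phig (t x : R) := (Rpower ((x+1)/2) t - 1)/(t*(t-1)).
Definition phigd (t x : R) := exp (t * ln ((x+1)/2)) / ((x+1)*(t-1)).
Definition phi2 (t x : R) := exp (t * ln ((x+1)/2)) / ((x+1)^2).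

Lemma d_phi0 x : 0 < x -> derivable_pt_lim phi0 x (phi0d x) /\ derivable_pt_lim phi0d x (phi2 0 x).
Proof.
intros hx; split; apply is_derive_Reals; unfold phi0, phi0d, phi2; unfold Rdiv in *; auto_derive; try lra.
- field; lra.
- rewrite Rmult_0_l, exp_0. field; lra.
Qed.

Lemma d_phi1 x : 0 < x -> derivable_pt_lim phi1 x (phi1d x) /\ derivable_pt_lim phi1d x (phi2 1 x).
Proof.
intros hx; split; apply is_derive_Reals; unfold phi1, phi1d, phi2; unfold Rdiv in *; auto_derive; try lra.
- unfold Rdiv; field; lra.
- rewrite (Rmult_1_l (ln _)), exp_ln by lra. field; lra.
Qed.

Lemma d_phig t x : t <> 0 -> t <> 1 -> 0 < x ->
  derivable_pt_lim (phig t) x (phigd t x) /\ derivable_pt_lim (phigd t) x (phi2 t x).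
Proof.
intros h0 h1 hx; assert (t - 1 <> 0) by lra; split; apply is_derive_Reals;
 unfold phig, phigd, phi2, Rpower; unfold Rdiv in *; auto_derive; try lra.
all: first [ field; repeat split; lra | repeat split; try lra; try (apply Rmult_integral_contrapositive_currified; lra) ].
all: first [ field; repeat split; lra | repeat split; try lra; try (apply Rmult_integral_contrapositive_currified; lra) ].
Qed.

Definition u (x : R) := (x+1)/(2*x).
Definition psi1 (x : R) := (1 - x) * ln ((x+1)/(2*x)).
Definition psi1d (x : R) := - ln ((x+1)/(2*x)) - (1-x)/(x*(x+1)).
Definition psig (s x : R) := (1 - x) * Rpower ((x+1)/(2*x)) (s-1) / (s-1).
Definition psigd (s x : R) := - exp ((s-1)*ln ((x+1)/(2*x))) / (s-1)
   - (1-x) * exp ((s-1)*ln ((x+1)/(2*x))) / (x*(x+1)).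
Definition psi2 (s x : R) := exp ((s-1)*ln ((x+1)/(2*x))) * ((4-s)*x+s) / (x^2*(x+1)^2).

Lemma d_psi1 x : 0 < x -> derivable_pt_lim psi1 x (psi1d x) /\ derivable_pt_lim psi1d x (psi2 1 x).
Proof.
intros hx; split; apply is_derive_Reals; unfold psi1, psi1d, psi2; unfold Rdiv in *; auto_derive.
all: try (repeat split; try lra; try (apply Rmult_lt_0_compat; [lra| apply Rinv_0_lt_compat; lra]); try (apply Rmult_integral_contrapositive_currified; lra)).
- field; lra.
- replace (1-1) with 0 by ring. rewrite Rmult_0_l, exp_0. field; lra.
Qed.

Lemma d_psig s x : s <> 1 -> 0 < x ->
  derivable_pt_lim (psig s) x (psigd s x) /\ derivable_pt_lim (psigd s) x (psi2 s x).
Proof.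
intros h1 hx; assert (s - 1 <> 0) by lra; split; apply is_derive_Reals;
 unfold psig, psigd, psi2, Rpower; unfold Rdiv in *; auto_derive.
all: try (repeat split; try lra; try (apply Rmult_lt_0_compat; [lra| apply Rinv_0_lt_compat; lra]); try (apply Rmult_integral_contrapositive_currified; lra)).
all: first [ field; repeat split; lra | repeat split; try lra; try (apply Rmult_integral_contrapositive_currified; lra) ].
all: first [ field; repeat split; lra | repeat split; try lra; try (apply Rmult_integral_contrapositive_currified; lra) ].
Qed.
Lemma rsum_ext n f g : (forall i, (i < n)%nat -> f i = g i) -> rsum n f = rsum n g.
Proof. induction n; simpl; intros H; auto. rewrite IHn by (intros; apply H; lia). rewrite H by lia; auto. Qed.

Lemma rsum_le n f g : (forall i, (i < n)%nat -> f i <= g i) -> rsum n f <= rsum n g.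
Proof. induction n; simpl; intros H; [lra|]. assert (H1 := H n (Nat.lt_succ_diag_r n)).
 assert (rsum n f <= rsum n g) by (apply IHn; intros; apply H; lia). lra. Qed.

Lemma rsum_lt n f g : (1 <= n)%nat -> (forall i, (i < n)%nat -> f i < g i) -> rsum n f < rsum n g.
Proof. destruct n as [|n]; [lia|]. intros _ H. simpl.
 assert (rsum n f <= rsum n g) by (apply rsum_le; intros; apply Rlt_le, H; lia).
 assert (H1 := H n (Nat.lt_succ_diag_r n)). lra. Qed.

Lemma rsum_lin n (q f g : nat -> R) c :
  rsum n (fun i => q i * (f i - c * g i)) = rsum n (fun i => q i * f i) - c * rsum n (fun i => q i * g i).
Proof. induction n; simpl; [ring|]. rewrite IHn; ring. Qed.

Lemma rsum_lin2 n (q f g : nat -> R) c :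
  rsum n (fun i => q i * (c * g i - f i)) = c * rsum n (fun i => q i * g i) - rsum n (fun i => q i * f i).
Proof. induction n; simpl; [ring|]. rewrite IHn; ring. Qed.

Lemma rsum_diff n c (p q : nat -> R) :
  rsum n (fun i => c * (p i - q i)) = c * (rsum n p - rsum n q).
Proof. induction n; simpl; [ring|]. rewrite IHn; ring. Qed.

Lemma exists_le n (p q : nat -> R) : (1 <= n)%nat -> rsum n p = rsum n q ->
  exists i, (i < n)%nat /\ p i <= q i.
Proof. intros hn he. destruct (classic (exists i, (i < n)%nat /\ p i <= q i)) as [h|h]; auto.
 exfalso. assert (rsum n q < rsum n p); [|lra].
 apply rsum_lt; auto. intros i hi. destruct (Rlt_le_dec (q i) (p i)); auto. exfalso; apply h; eauto. Qed.

Lemma F1_mono F1 F2 a b : (forall x, a <= x <= b -> derivable_pt_lim F1 x (F2 x)) ->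
  (forall x, a <= x <= b -> 0 <= F2 x) -> forall c d, a <= c -> c <= d -> d <= b -> F1 c <= F1 d.
Proof. intros hd h2 c d hc hcd hd2. destruct (Rle_lt_or_eq_dec _ _ hcd) as [lt|eq]; [|subst; lra].
 destruct (MVT_cor2 F1 F2 c d lt) as [e [he1 he2]]. intros; apply hd; lra.
 assert (0 <= F2 e) by (apply h2; lra). nra. Qed.

Lemma tangent F F1 F2 a b : a <= 1 <= b ->
  (forall x, a <= x <= b -> derivable_pt_lim F x (F1 x)) ->
  (forall x, a <= x <= b -> derivable_pt_lim F1 x (F2 x)) ->
  (forall x, a <= x <= b -> 0 <= F2 x) ->
  forall x, a <= x <= b -> F 1 + F1 1 * (x - 1) <= F x.
Proof. intros hab hd1 hd2 h2 x hx.
 destruct (Rtotal_order x 1) as [lt|[eq|gt]].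
 - destruct (MVT_cor2 F F1 x 1 lt) as [e [he1 he2]]. intros; apply hd1; lra.
   assert (F1 e <= F1 1) by (apply (F1_mono F1 F2 a b); auto; lra). nra.
 - subst; lra.
 - destruct (MVT_cor2 F F1 1 x gt) as [e [he1 he2]]. intros; apply hd1; lra.
   assert (F1 1 <= F1 e) by (apply (F1_mono F1 F2 a b); auto; lra). nra.
Qed.

Lemma core n (p q : nat -> R) a b F F1 F2 : a <= 1 <= b ->
  (forall x, a <= x <= b -> derivable_pt_lim F x (F1 x)) ->
  (forall x, a <= x <= b -> derivable_pt_lim F1 x (F2 x)) ->
  (forall x, a <= x <= b -> 0 <= F2 x) -> F 1 = 0 ->
  (forall i, (i < n)%nat -> 0 < q i) -> rsum n p = rsum n q ->
  (forall i, (i < n)%nat -> a <= p i / q i <= b) ->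
  0 <= rsum n (fun i => q i * F (p i / q i)).
Proof. intros hab hd1 hd2 h2 hF1 hq hs hx.
 apply Rle_trans with (rsum n (fun i => F1 1 * (p i - q i))).
 - rewrite rsum_diff, hs; lra.
 - apply rsum_le. intros i hi. assert (T := tangent F F1 F2 a b hab hd1 hd2 h2 _ (hx i hi)).
   assert (hqi := hq i hi). rewrite hF1 in T.
   replace (F1 1 * (p i - q i)) with (q i * (F1 1 * (p i / q i - 1))) by (field; lra).
   apply Rmult_le_compat_l; lra.
Qed.

Lemma exp_mono a b : a <= b -> exp a <= exp b.
Proof. intros h; destruct (Rle_lt_or_eq_dec _ _ h) as [l|e]; [apply Rlt_le, exp_increasing; auto|subst; lra]. Qed.

Lemma ln_le a b : 0 < a -> a <= b -> ln a <= ln b.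
Proof. intros h1 h; destruct (Rle_lt_or_eq_dec _ _ h) as [l|e]; [apply Rlt_le, ln_increasing; auto|subst; lra]. Qed.

Definition E (s t x : R) := (s - t - 1) * ln ((x+1)/2) - (s+1) * ln x.

Lemma hmono s t x z cx cz : 0 <= s -> -1 <= t -> 0 < x -> x <= z -> 0 < cz / z -> cz / z <= cx / x ->
  exp (E s t z) * cz <= exp (E s t x) * cx.
Proof. intros hs ht hx hxz hcz hc.
 assert (K : forall w c, 0 < w -> exp (E s t w) * c = exp (E s t w + ln w) * (c / w)).
 { intros w c hw. rewrite exp_plus, exp_ln by lra. field; lra. }
 rewrite (K z cz), (K x cx) by lra.
 apply Rmult_le_compat; try lra. apply Rlt_le, exp_pos.
 apply exp_mono. unfold E.
 assert (l1 : ln x <= ln z) by (apply ln_le; lra).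
 destruct (Rle_lt_dec 0 (s - t - 1)) as [ha|ha].
 - assert (Kw : forall w, 0 < w -> ln ((w+1)/2) = ln ((w+1)/(2*w)) + ln w).
   { intros w hw. rewrite <- ln_mult. f_equal. field; lra. apply Rdiv_lt_0_compat; lra. lra. }
   rewrite (Kw z), (Kw x) by lra.
   assert (ln ((z+1)/(2*z)) <= ln ((x+1)/(2*x))).
   { apply ln_le. apply Rdiv_lt_0_compat; lra.
     unfold Rdiv. apply Rle_trans with ((z+1) * / (2*z) + (x - z) * / (2*x) * / (2 * z) * 0); [lra|].
     replace ((x+1) * / (2*x)) with (/2 + / (2*x)) by (field; lra).
     replace ((z+1) * / (2*z)) with (/2 + / (2*z)) by (field; lra).
     assert (/ (2*z) <= / (2*x)) by (apply Rinv_le_contravar; lra). lra. }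
   nra.
 - assert (ln ((x+1)/2) <= ln ((z+1)/2)) by (apply ln_le; lra). nra.
Qed.

Definition phiT (t x : R) := if Req_EM_T t 0 then phi0 x else if Req_EM_T t 1 then phi1 x else phig t x.
Definition psiT (s x : R) := if Req_EM_T s 1 then psi1 x else psig s x.

Lemma phiT_d t : exists d, forall x, 0 < x ->
  derivable_pt_lim (phiT t) x (d x) /\ derivable_pt_lim d x (phi2 t x).
Proof. unfold phiT. destruct (Req_EM_T t 0) as [e0|n0].
 - subst. exists phi0d. apply d_phi0.
 - destruct (Req_EM_T t 1) as [e1|n1].
   + subst. exists phi1d. apply d_phi1.
   + exists (phigd t). intros; apply d_phig; auto.
Qed.

Lemma psiT_d s : exists d, forall x, 0 < x ->
  derivable_pt_lim (psiT s) x (d x) /\ derivable_pt_lim d x (psi2 s x).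
Proof. unfold psiT. destruct (Req_EM_T s 1) as [e1|n1].
 - subst. exists psi1d. apply d_psi1.
 - exists (psigd s). intros; apply d_psig; auto.
Qed.

Lemma phiT_1 t : phiT t 1 = 0.
Proof. unfold phiT, phi0, phi1, phig, Rpower.
 replace ((1+1)/2) with 1 by field. rewrite ln_1.
 destruct (Req_EM_T t 0); [|destruct (Req_EM_T t 1)].
 - ring. - ring. - rewrite Rmult_0_r, exp_0. unfold Rdiv; ring.
Qed.

Lemma psiT_1 s : psiT s 1 = 0.
Proof. unfold psiT, psi1, psig. destruct (Req_EM_T s 1); unfold Rdiv; ring. Qed.

Lemma dlin f g f' g' c x : derivable_pt_lim f x f' -> derivable_pt_lim g x g' ->
  derivable_pt_lim (fun y => f y - c * g y) x (f' - c * g').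
Proof. intros h1 h2. apply (derivable_pt_lim_minus f (mult_real_fct c g)); auto.
 apply derivable_pt_lim_scal; auto. Qed.

Lemma dlin2 f g f' g' c x : derivable_pt_lim f x f' -> derivable_pt_lim g x g' ->
  derivable_pt_lim (fun y => c * g y - f y) x (c * g' - f').
Proof. intros h1 h2. apply (derivable_pt_lim_minus (mult_real_fct c g) f); auto.
 apply derivable_pt_lim_scal; auto. Qed.

Lemma ident s t x : 0 < x ->
  psi2 s x = phi2 t x * (exp (E s t x) * ((4 - s) * x + s)).
Proof. intros hx. unfold psi2, phi2, E.
 replace (ln ((x+1)/(2*x))) with (ln ((x+1)/2) - ln x).
 2:{ replace ((x+1)/(2*x)) with ((x+1)/2 * / x) by (field; lra).
     rewrite ln_mult, ln_Rinv; try lra; try (apply Rinv_0_lt_compat; lra); apply Rdiv_lt_0_compat; lra. }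
 replace ((s - 1) * (ln ((x + 1) / 2) - ln x)) with
   ((t * ln ((x + 1) / 2) + ((s - t - 1) * ln ((x + 1) / 2) - (s + 1) * ln x)) + ln x + ln x) by ring.
 rewrite !exp_plus, exp_ln by lra. field; lra.
Qed.

Lemma phi2_pos t x : 0 < x -> 0 < phi2 t x.
Proof. intros hx; unfold phi2. apply Rdiv_lt_0_compat. apply exp_pos. apply pow_lt; lra. Qed.

Lemma Omega_eq n t p q : (forall i, (i < n)%nat -> 0 < p i) -> (forall i, (i < n)%nat -> 0 < q i) ->
  rsum n q = 1 -> Omega n t q p = rsum n (fun i => q i * phiT t (p i / q i)).
Proof. intros hp hq sq. unfold Omega, phiT.
 destruct (Req_EM_T t 0); [|destruct (Req_EM_T t 1)].
 - apply rsum_ext; intros i hi. specialize (hp i hi); specialize (hq i hi). unfold phi0.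
   replace (2 * q i / (p i + q i)) with (/ ((p i / q i + 1) / 2)) by (field; lra).
   rewrite ln_Rinv; [ring|]. apply Rdiv_lt_0_compat; [|lra].
   assert (0 < p i / q i) by (apply Rdiv_lt_0_compat; lra). lra.
 - apply rsum_ext; intros i hi. specialize (hp i hi); specialize (hq i hi). unfold phi1.
   replace ((p i + q i) / (2 * q i)) with ((p i / q i + 1) / 2) by (field; lra).
   field; lra.
 - assert (G : forall m, (m <= n)%nat -> / (t * (t - 1)) * (rsum m (fun i => q i * Rpower ((p i + q i) / (2 * q i)) t) - rsum m q) =
     rsum m (fun i => q i * phig t (p i / q i))).
   { induction m; intros hm; simpl. ring. rewrite <- IHm by lia.
     assert (hpi := hp m ltac:(lia)); assert (hqi := hq m ltac:(lia)). unfold phig.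
     replace ((p m + q m) / (2 * q m)) with ((p m / q m + 1) / 2) by (field; lra).
     field. split; lra. }
   rewrite <- (G n) by lia. rewrite sq. reflexivity.
Qed.

Lemma zeta_eq n s p q : (forall i, (i < n)%nat -> 0 < p i) -> (forall i, (i < n)%nat -> 0 < q i) ->
  zeta n s q p = rsum n (fun i => q i * psiT s (p i / q i)).
Proof. intros hp hq. unfold zeta, psiT.
 destruct (Req_EM_T s 1).
 - apply rsum_ext; intros i hi. specialize (hp i hi); specialize (hq i hi). unfold psi1.
   replace ((p i + q i) / (2 * p i)) with ((p i / q i + 1) / (2 * (p i / q i))) by (field; lra).
   field; lra.
 - assert (G : forall m, (m <= n)%nat -> / (s - 1) * rsum m (fun i => (q i - p i) * Rpower ((p i + q i) / (2 * p i)) (s - 1)) =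
     rsum m (fun i => q i * psig s (p i / q i))).
   { induction m; intros hm; simpl. ring. rewrite <- IHm by lia.
     assert (hpi := hp m ltac:(lia)); assert (hqi := hq m ltac:(lia)). unfold psig.
     replace ((p m + q m) / (2 * p m)) with ((p m / q m + 1) / (2 * (p m / q m))) by (field; lra).
     field. split; lra. }
   apply G; lia.
Qed.

Lemma const_eq a s t b : 0 < a ->
  / Rpower a (s + 1) * Rpower ((a + 1) / 2) (s - t - 1) * b = exp (E s t a) * b.
Proof. intros ha. unfold Rpower, E. rewrite <- exp_Ropp.
 replace ((s - t - 1) * ln ((a + 1) / 2) - (s + 1) * ln a) with
   (- ((s + 1) * ln a) + (s - t - 1) * ln ((a + 1) / 2)) by ring.
 rewrite exp_plus. ring. Qed.

Theorem theorem4p1 (n : nat) (p q : nat -> R) (r Rr s t : R) :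
  (2 <= n)%nat -> Gamma n p -> Gamma n q ->
  0 < r -> r <= Rr ->
  (forall i, (i < n)%nat -> r <= p i / q i <= Rr) ->
  0 <= s <= 4 -> -1 <= t ->
  / Rpower Rr (s + 1) * Rpower ((Rr + 1) / 2) (s - t - 1)
      * ((4 - s) * Rr + s) * Omega n t q p
  <= zeta n s q p
  <= / Rpower r (s + 1) * Rpower ((r + 1) / 2) (s - t - 1)
      * ((4 - s) * Rr + s) * Omega n t q p.
Proof.
 intros hn [hp sp] [hq sq] hr hrR hx [hs0 hs4] ht.
 assert (h1 : r <= 1 <= Rr).
 { destruct (exists_le n p q ltac:(lia) ltac:(lra)) as [i [hi hle]].
   destruct (exists_le n q p ltac:(lia) ltac:(lra)) as [j [hj hle2]].
   assert (A := hx i hi); assert (B := hx j hj).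
   assert (hpi := hp i hi); assert (hqi := hq i hi); assert (hpj := hp j hj); assert (hqj := hq j hj).
   split.
   - apply Rle_trans with (p i / q i); [lra|]. apply Rle_trans with (q i / q i).
     apply Rmult_le_compat_r; [apply Rlt_le, Rinv_0_lt_compat; lra| lra]. right; field; lra.
   - apply Rle_trans with (p j / q j); [|lra]. apply Rle_trans with (q j / q j).
     right; field; lra. apply Rmult_le_compat_r; [apply Rlt_le, Rinv_0_lt_compat; lra| lra]. }
 rewrite Omega_eq by auto. rewrite zeta_eq by auto.
 rewrite !const_eq by lra.
 assert (Lpos : forall x, 0 < x -> 0 < (4 - s) * x + s).
 { intros x hx0. destruct (Rle_lt_or_eq_dec _ _ hs4) as [l|e]. nra. subst; lra. }
 destruct (phiT_d t) as [d1 Hd1]; destruct (psiT_d s) as [d2 Hd2].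
 set (m := exp (E s t Rr) * ((4 - s) * Rr + s)).
 set (M := exp (E s t r) * ((4 - s) * Rr + s)).
 split.
 - assert (0 <= rsum n (fun i => q i * (psiT s (p i / q i) - m * phiT t (p i / q i)))).
   { apply (core n p q r Rr (fun x => psiT s x - m * phiT t x) (fun x => d2 x - m * d1 x)
        (fun x => psi2 s x - m * phi2 t x)); auto.
     - intros x hx0. apply dlin; [apply (proj1 (Hd2 x ltac:(lra)))|apply (proj1 (Hd1 x ltac:(lra)))].
     - intros x hx0. apply dlin; [apply (proj2 (Hd2 x ltac:(lra)))|apply (proj2 (Hd1 x ltac:(lra)))].
     - intros x hx0. rewrite (ident s t x) by lra.
       assert (P := phi2_pos t x ltac:(lra)).
       assert (m <= exp (E s t x) * ((4 - s) * x + s)); [|nra].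
       unfold m. apply hmono; try lra.
       + apply Rdiv_lt_0_compat; [apply Lpos|]; lra.
       + replace (((4 - s) * Rr + s) / Rr) with ((4 - s) + s * / Rr) by (field; lra).
         replace (((4 - s) * x + s) / x) with ((4 - s) + s * / x) by (field; lra).
         assert (/ Rr <= / x) by (apply Rinv_le_contravar; lra). nra.
     - rewrite psiT_1, phiT_1; ring.
     - lra. }
   rewrite rsum_lin in H. lra.
 - assert (0 <= rsum n (fun i => q i * (M * phiT t (p i / q i) - psiT s (p i / q i)))).
   { apply (core n p q r Rr (fun x => M * phiT t x - psiT s x) (fun x => M * d1 x - d2 x)
        (fun x => M * phi2 t x - psi2 s x)); auto.
     - intros x hx0. apply dlin2; [apply (proj1 (Hd2 x ltac:(lra)))|apply (proj1 (Hd1 x ltac:(lra)))].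
     - intros x hx0. apply dlin2; [apply (proj2 (Hd2 x ltac:(lra)))|apply (proj2 (Hd1 x ltac:(lra)))].
     - intros x hx0. rewrite (ident s t x) by lra.
       assert (P := phi2_pos t x ltac:(lra)).
       assert (exp (E s t x) * ((4 - s) * x + s) <= M); [|nra].
       assert (exp (E s t x) * 1 <= exp (E s t r) * 1).
       { apply hmono; try lra. apply Rdiv_lt_0_compat; lra.
         unfold Rdiv; rewrite !Rmult_1_l; apply Rinv_le_contravar; lra. }
       unfold M. assert (0 < exp (E s t x)) by apply exp_pos.
       assert (hL := Lpos x ltac:(lra)).
       assert (hLL : (4 - s) * x + s <= (4 - s) * Rr + s) by nra.
       apply Rmult_le_compat; lra.
     - rewrite psiT_1, phiT_1; ring.
     - lra. }
   rewrite rsum_lin2 in H. lra.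
Qed.
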